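(* The bi-immune symmetric group $G_{\mathfrak{B}}$ is dense in $\mathrm{Sym}(\mathbb{N})$ with respect to the topology of pointwise convergence (equivalently, with respect to the metric $d$ below).
   Context: $\mathbb{N}$ denotes the non-negative integers, and $\mathrm{Sym}(\mathbb{N})$ the group of all permutations of $\mathbb{N}$ under composition ($g \circ f$ means apply $f$ first). For $\sigma, \tau \in \mathrm{Sym}(\mathbb{N})$ let $\rho(\sigma,\tau) = 0$ if $\sigma = \tau$, and otherwise $\rho(\sigma,\tau) = 2^{-j}$ where $j$ is the least $i$ with $\sigma(i) \neq \tau(i)$; set $d(\sigma,\tau) = \max\{\rho(\sigma,\tau), \rho(\sigma^{-1},\tau^{-1})\}$, a complete metric inducing the pointwise convergence topology. For $i \in \mathbb{N}$, $\sigma_{(i)}$ is the permutation swapping $i$ and $i+1$ and fixing all other numbers. For $A \subseteq \mathbb{N}$ with increasing enumeration $a_0 < a_1 < \cdots$, define $\sigma_A(x) = \lim_{n \to \infty} (\sigma_{(a_0)} \circ \sigma_{(a_1)} \circ \cdots \circ \sigma_{(a_n)})(x)$ (eventually constant for each $x$). A set $A$ is immune if it is infinite and contains no infinite computably enumerable subset; $A$ is bi-immune if both $A$ and $\mathbb{N} - A$ are immune. For bi-immune $A$, $\sigma_A$ is a permutation of $\mathbb{N}$. The bi-immune symmetric group $G_{\mathfrak{B}}$ is the subgroup of $\mathrm{Sym}(\mathbb{N})$ generated by $\{\sigma_A : A \text{ bi-immune}\}$. *)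

(* Defs.v *)
From Stdlib Require Import Arith List.
Import ListNotations.

(** Syntax of partial recursive function terms (arity left implicit;
    arguments are passed as a list of naturals). *)
Inductive recf : Type :=
| RZero : recf
| RSucc : recf
| RProj : nat -> recf
| RComp : recf -> list recf -> recf
| RRec  : recf -> recf -> recf        (* primitive recursion on first arg *)
| RMin  : recf -> recf.               (* unbounded minimisation on first arg *)

Inductive eval : recf -> list nat -> nat -> Prop :=
| ev_zero : forall args, eval RZero args 0
| ev_succ : forall x rest, eval RSucc (x :: rest) (S x)
| ev_proj : forall i args, i < length args -> eval (RProj i) args (nth i args 0)
| ev_comp : forall f gs args ys y,
    evals gs args ys -> eval f ys y -> eval (RComp f gs) args y
| ev_rec0 : forall f g rest y, eval f rest y -> eval (RRec f g) (0 :: rest) y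
| ev_recS : forall f g n rest r y,
    eval (RRec f g) (n :: rest) r -> eval g (n :: r :: rest) y ->
    eval (RRec f g) (S n :: rest) y
| ev_min : forall f args y,
    eval f (y :: args) 0 ->
    (forall z, z < y -> exists v, v <> 0 /\ eval f (z :: args) v) ->
    eval (RMin f) args y
with evals : list recf -> list nat -> list nat -> Prop :=
| evs_nil : forall args, evals [] args []
| evs_cons : forall g gs args y ys,
    eval g args y -> evals gs args ys -> evals (g :: gs) args (y :: ys).

Definition ce (B : nat -> Prop) : Prop :=
  exists f : recf, forall x, B x <-> exists y, eval f [x] y.

Definition infinite_set (B : nat -> Prop) : Prop :=
  forall n, exists m, n <= m /\ B m.

Definition immune (A : nat -> Prop) : Prop :=
  infinite_set A /\
  ~ (exists B : nat -> Prop, ce B /\ infinite_set B /\ (forall x, B x -> A x)).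

Definition bi_immune (A : nat -> bool) : Prop :=
  immune (fun x => A x = true) /\ immune (fun x => A x = false).

Definition swap (i x : nat) : nat :=
  if Nat.eqb x i then S i else if Nat.eqb x (S i) then i else x.

(** [partial_prod A N] = sigma_(a_0) o sigma_(a_1) o ... o sigma_(a_k), where
    a_0 < ... < a_k are the elements of A that are <= N
    (the rightmost factor is applied first). *)
Fixpoint partial_prod (A : nat -> bool) (N : nat) : nat -> nat :=
  match N with
  | 0 => if A 0 then swap 0 else (fun x => x)
  | S M => if A (S M) then (fun x => partial_prod A M (swap (S M) x))
           else partial_prod A M
  end.

Definition is_sigma (A : nat -> bool) (s : nat -> nat) : Prop :=
  forall x, exists N0, forall N, N0 <= N -> partial_prod A N x = s x.

Definition bi_immune_gen (s : nat -> nat) : Prop :=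
  exists A, bi_immune A /\ is_sigma A s.

Definition inverses (f g : nat -> nat) : Prop :=
  (forall x, f (g x) = x) /\ (forall x, g (f x) = x).

Inductive in_gen (S : (nat -> nat) -> Prop) : (nat -> nat) -> Prop :=
| gen_id : in_gen S (fun x => x)
| gen_mul : forall s g, S s -> in_gen S g -> in_gen S (fun x => s (g x))
| gen_mulinv : forall s s' g, S s -> inverses s s' -> in_gen S g ->
    in_gen S (fun x => s' (g x)).

Definition G_B (g : nat -> nat) : Prop := in_gen bi_immune_gen g.

(* Main.v *)
Require Import Defs.
From Stdlib Require Import Arith List Lia ClassicalEpsilon Cantor.
Import ListNotations.

Ltac swt := repeat (match goal with |- context [Nat.eqb ?a ?b] =>
  lazymatch a with context [if _ then _ else _] => fail | _ => destruct (Nat.eqb_spec a b) end end; cbn beta iota); try lia.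

Lemma swap_invol i x : swap i (swap i x) = x.
Proof. unfold swap; swt. Qed.
Lemma swap_fix i x : x < i -> swap i x = x.
Proof. intro; unfold swap; swt. Qed.
Lemma swap_fix2 i x : S i < x -> swap i x = x.
Proof. intro; unfold swap; swt. Qed.
Lemma swap_bound i x : x <= S i -> swap i x <= S i.
Proof. intro; unfold swap; swt. Qed.
Lemma swap_ii i : swap i i = S i.
Proof. unfold swap; rewrite Nat.eqb_refl; auto. Qed.

Fixpoint pinv (A : nat -> bool) (N : nat) : nat -> nat :=
  match N with
  | 0 => if A 0 then swap 0 else (fun x => x)
  | S M => if A (S M) then (fun x => swap (S M) (pinv A M x)) else pinv A M
  end.

Lemma pp_pinv A N x : partial_prod A N (pinv A N x) = x /\ pinv A N (partial_prod A N x) = x.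
Proof.
  revert x; induction N; intro x; simpl.
  - destruct (A 0); split; auto using swap_invol.
  - destruct (A (S N)); simpl.
    + split. rewrite swap_invol; apply IHN. rewrite (proj2 (IHN _)); apply swap_invol.
    + apply IHN.
Qed.

Lemma pp_step A M x : x <= M -> partial_prod A (S M) x = partial_prod A M x.
Proof. intro H; simpl; destruct (A (S M)); auto; rewrite swap_fix; auto; lia. Qed.

Lemma pp_stab A N x : x <= N -> partial_prod A N x = partial_prod A x x.
Proof.
  induction N; intro H.
  - assert (x = 0) by lia; subst; auto.
  - destruct (Nat.eq_dec x (S N)). subst; auto.
    rewrite pp_step by lia; apply IHN; lia.
Qed.

Lemma pinv_fix A M x : S M < x -> pinv A M x = x.
Proof.
  induction M; intro H; simpl.
  - destruct (A 0); auto; apply swap_fix2; lia.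
  - destruct (A (S M)); rewrite IHM by lia; auto; apply swap_fix2; lia.
Qed.

Lemma pinv_bound A M x : x <= S M -> pinv A M x <= S M.
Proof.
  induction M; intro H; simpl.
  - destruct (A 0); auto; apply swap_bound; lia.
  - destruct (Nat.eq_dec x (S (S M))).
    + subst. destruct (A (S M)). rewrite pinv_fix by lia. apply swap_bound; lia. rewrite pinv_fix by lia. lia.
    + destruct (A (S M)). apply swap_bound. specialize (IHM ltac:(lia)); lia.
      specialize (IHM ltac:(lia)); lia.
Qed.

Lemma pinv_stab A c y : A c = false -> y < c -> forall d, pinv A (c + d) y = pinv A c y.
Proof.
  intros Hc Hy d; induction d. rewrite Nat.add_0_r; auto.
  rewrite Nat.add_succ_r; simpl.
  assert (pinv A c y <= c).
  { destruct c. lia. simpl. rewrite Hc. apply pinv_bound; lia. }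
  destruct (A (S (c + d))); rewrite IHd; auto. apply swap_fix; lia.
Qed.

Lemma sigma_exists A : (forall m, exists c, m < c /\ A c = false) ->
  exists s s', is_sigma A s /\ inverses s s' /\
    (forall x, exists N0, forall N, N0 <= N -> pinv A N x = s' x).
Proof.
  intro HA.
  set (N0 := fun y => epsilon (inhabits 0)
        (fun N0 => forall N, N0 <= N -> pinv A N y = pinv A N0 y)).
  assert (HN0 : forall y N, N0 y <= N -> pinv A N y = pinv A (N0 y) y).
  { intro y. unfold N0. apply epsilon_spec.
    destruct (HA y) as [c [H1 H2]]. exists c. intros N HN.
    replace N with (c + (N - c)) by lia. apply pinv_stab; auto. }
  exists (fun x => partial_prod A x x), (fun y => pinv A (N0 y) y).
  split; [|split; [split|]].
  - intro x; exists x; intros; apply pp_stab; auto.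
  - intro y. set (z := pinv A (N0 y) y).
    set (N := Nat.max z (N0 y)).
    assert (E : pinv A N y = z) by (apply HN0; unfold N; lia).
    rewrite <- (pp_stab A N z) by (unfold N; lia).
    rewrite <- E. apply pp_pinv.
  - intro x. set (z := partial_prod A x x).
    set (N := Nat.max x (N0 z)).
    assert (E : partial_prod A N x = z) by (apply pp_stab; unfold N; lia).
    rewrite <- (HN0 z N) by (unfold N; lia).
    rewrite <- E. apply pp_pinv.
  - intro y; exists (N0 y); auto.
Qed.

Lemma pp_shift A B i : (forall j, j <= i -> A j = false) -> B i = true ->
  (forall j, j <> i -> B j = A j) ->
  forall N x, i <= N -> partial_prod B N x = swap i (partial_prod A N x).
Proof.
  intros HA HBi HB.
  assert (Hid : forall C N x, (forall j, j <= N -> C j = false) -> partial_prod C N x = x).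
  { intros C N; induction N; intros x HC; simpl.
    - rewrite (HC 0) by lia; auto.
    - rewrite (HC (S N)) by lia. apply IHN; intros; apply HC; lia. }
  induction N; intros x HN.
  - assert (i = 0) by lia; subst. simpl. rewrite HBi, HA; auto.
  - destruct (Nat.eq_dec i (S N)).
    + subst. simpl. rewrite HBi, HA by lia.
      assert (H1 : forall j, j <= N -> B j = false) by (intros; rewrite HB by lia; apply HA; lia).
      assert (H2 : forall j, j <= N -> A j = false) by (intros; apply HA; lia).
      rewrite (Hid B N _ H1), (Hid A N _ H2); auto.
    + simpl. rewrite HB by lia. destruct (A (S N)); apply IHN; lia.
Qed.

Definition pr (a b : nat) := to_nat (a, b).
Lemma pr_inj a b c d : pr a b = pr c d -> a = c /\ b = d.
Proof. unfold pr; intro H. assert (E : (a,b) = (c,d)).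
  { rewrite <- (cancel_of_to (a,b)), <- (cancel_of_to (c,d)), H; auto. }
  inversion E; auto. Qed.
Global Opaque pr.

Definition encl_gen (e : recf -> nat) : list recf -> nat :=
  fix encl l := match l with [] => 0 | g :: l' => S (pr (e g) (encl l')) end.

Fixpoint enc (r : recf) : nat :=
  match r with
  | RZero => pr 0 0
  | RSucc => pr 1 0
  | RProj i => pr 2 i
  | RComp f gs => pr 3 (pr (enc f) (encl_gen enc gs))
  | RRec f g => pr 4 (pr (enc f) (enc g))
  | RMin f => pr 5 (enc f)
  end.

Fixpoint recf_ind2 (P : recf -> Prop) (HZ : P RZero) (HS : P RSucc)
  (HP : forall i, P (RProj i))
  (HC : forall f gs, P f -> Forall P gs -> P (RComp f gs))
  (HR : forall f g, P f -> P g -> P (RRec f g))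
  (HM : forall f, P f -> P (RMin f)) (r : recf) {struct r} : P r :=
  match r with
  | RZero => HZ | RSucc => HS | RProj i => HP i
  | RComp f gs => HC f gs (recf_ind2 P HZ HS HP HC HR HM f)
      ((fix go (l : list recf) : Forall P l :=
         match l with [] => Forall_nil P
         | g :: l' => Forall_cons g (recf_ind2 P HZ HS HP HC HR HM g) (go l') end) gs)
  | RRec f g => HR f g (recf_ind2 P HZ HS HP HC HR HM f) (recf_ind2 P HZ HS HP HC HR HM g)
  | RMin f => HM f (recf_ind2 P HZ HS HP HC HR HM f)
  end.

Lemma to_nat_inj p q : to_nat p = to_nat q -> p = q.
Proof. intro H. rewrite <- (cancel_of_to p), <- (cancel_of_to q), H; auto. Qed.

Lemma enc_inj : forall r1 r2, enc r1 = enc r2 -> r1 = r2.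
Proof.
  intro r1; induction r1 using recf_ind2; intros r2 Heq; destruct r2; cbn [enc] in Heq;
    apply pr_inj in Heq; destruct Heq as [Ht Hp]; try discriminate; auto.
  - apply pr_inj in Hp; destruct Hp as [H1 H2]. f_equal; auto.
    clear IHr1 H1 Ht. revert l H2. induction H; intros gs2 Hl.
    + destruct gs2; simpl in Hl; auto; discriminate.
    + destruct gs2; simpl in Hl; [discriminate|].
      injection Hl as Hl. apply pr_inj in Hl. destruct Hl.
      f_equal; auto.
  - apply pr_inj in Hp; destruct Hp. f_equal; auto.
  - f_equal; auto.
Qed.

Definition dom (f : recf) (x : nat) : Prop := exists y, eval f [x] y.

Definition E (k : nat) : recf :=
  epsilon (inhabits RZero) (fun f => enc f = fst (of_nat k)).

Lemma E_spec f m : exists k, m <= k /\ E k = f.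
Proof.
  exists (to_nat (enc f, m)). split.
  - pose proof (to_nat_non_decreasing (enc f) m); lia.
  - unfold E. apply enc_inj. rewrite cancel_of_to; simpl.
    pose proof (epsilon_spec (inhabits RZero) (fun g => enc g = fst (of_nat (to_nat (enc f, m))))) as HH.
    rewrite cancel_of_to in HH. simpl in HH. apply HH. exists f. auto.
Qed.

Definition pick (f : recf) (m : nat) : nat :=
  m + epsilon (inhabits 0) (fun d => dom f (m + d)).

Lemma pick_dom f m : infinite_set (dom f) -> dom f (pick f m).
Proof.
  intro H. unfold pick. apply (epsilon_spec (inhabits 0) (fun d => dom f (m + d))).
  destruct (H m) as [x [Hx Hd]]. exists (x - m). replace (m + (x - m)) with x by lia; auto.
Qed.

Lemma pick_ge f m : m <= pick f m.
Proof. unfold pick; lia. Qed.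

Fixpoint b (k : nat) : nat :=
  match k with 0 => 0 | S k' => S (pick (E k') (S (pick (E k') (b k')))) end.
Definition xk k := pick (E k) (b k).
Definition yk k := pick (E k) (S (xk k)).

Lemma b_x k : b k <= xk k.
Proof. apply pick_ge. Qed.
Lemma x_y k : xk k < yk k.
Proof. unfold yk. pose proof (pick_ge (E k) (S (xk k))); lia. Qed.
Lemma y_b k : yk k < b (S k).
Proof. simpl. fold (xk k). fold (yk k). lia. Qed.
Lemma b_mono j k : j <= k -> b j <= b k.
Proof.
  induction 1; auto. pose proof (b_x m); pose proof (x_y m); pose proof (y_b m); lia.
Qed.
Lemma b_ge k : k <= b k.
Proof. induction k; [lia|]. pose proof (b_x k); pose proof (x_y k); pose proof (y_b k); lia. Qed.

Definition Cs (z : nat) : bool :=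
  if excluded_middle_informative (exists k, xk k = z) then true else false.

Definition strong (C : nat -> bool) := forall f, infinite_set (dom f) -> forall m,
  (exists x, m <= x /\ dom f x /\ C x = true) /\ (exists y, m <= y /\ dom f y /\ C y = false).

Lemma Cs_strong : strong Cs.
Proof.
  intros f Hf m. destruct (E_spec f m) as [k [Hk HE]].
  pose proof (b_ge k). pose proof (b_x k). pose proof (x_y k).
  split.
  - exists (xk k). split; [lia|split].
    + unfold xk; rewrite HE; apply pick_dom; auto.
    + unfold Cs. destruct (excluded_middle_informative _) as [_|n]; auto.
      exfalso; apply n; eauto.
  - exists (yk k). split; [lia|split].
    + unfold yk; rewrite HE; apply pick_dom; auto.
    + unfold Cs. destruct (excluded_middle_informative _) as [[j Hj]|_]; auto.
      exfalso. destruct (lt_eq_lt_dec j k) as [[Hlt|Heq]|Hgt].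
      * pose proof (b_mono (S j) k Hlt). pose proof (b_x j); pose proof (x_y j); pose proof (y_b j). lia.
      * subst; lia.
      * pose proof (b_mono (S k) j Hgt). pose proof (b_x j). pose proof (y_b k). lia.
Qed.

Lemma strong_bi C i A : strong C -> (forall j, i < j -> A j = C j) -> bi_immune A.
Proof.
  intros HC HA.
  assert (Hall : infinite_set (dom RZero)).
  { intro n; exists n; split; auto. exists 0; constructor. }
  assert (Hinf : forall B f, (forall x, B x <-> exists y, eval f [x] y) -> infinite_set B -> infinite_set (dom f)).
  { intros B f Hf HB n. destruct (HB n) as [m [Hm HBm]]. exists m; split; auto. apply Hf; auto. }
  split; split.
  - intro n. destruct (HC RZero Hall (n + S i)) as [[x [Hx [_ Hc]]] _].
    exists x; split; [lia|]. rewrite HA; auto; lia.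
  - intros [B [[f Hf] [HB Hsub]]].
    destruct (HC f (Hinf B f Hf HB) (S i)) as [_ [y [Hy [Hd Hc]]]].
    assert (A y = true) by (apply Hsub, Hf; auto). rewrite HA in H by lia. congruence.
  - intro n. destruct (HC RZero Hall (n + S i)) as [_ [x [Hx [_ Hc]]]].
    exists x; split; [lia|]. rewrite HA; auto; lia.
  - intros [B [[f Hf] [HB Hsub]]].
    destruct (HC f (Hinf B f Hf HB) (S i)) as [[y [Hy [Hd Hc]]] _].
    assert (A y = false) by (apply Hsub, Hf; auto). rewrite HA in H by lia. congruence.
Qed.

Fixpoint prod (L : list nat) (x : nat) : nat :=
  match L with [] => x | a :: L' => swap a (prod L' x) end.

Lemma prod_app L1 L2 x : prod (L1 ++ L2) x = prod L1 (prod L2 x).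
Proof. induction L1; simpl; congruence. Qed.

Lemma prod_rev L : forall x, prod (rev L) (prod L x) = x /\ prod L (prod (rev L) x) = x.
Proof.
  induction L; intro x; simpl; auto.
  rewrite !prod_app; simpl. rewrite swap_invol. split. apply IHL.
  rewrite (proj2 (IHL _)). apply swap_invol.
Qed.

Fixpoint chain (m k : nat) : list nat :=
  match k with 0 => [] | S k' => (m + k') :: chain m k' end.

Lemma chain_m m k : prod (chain m k) m = m + k.
Proof. induction k; simpl. lia. rewrite IHk, swap_ii; lia. Qed.
Lemma chain_fix m k x : x < m -> prod (chain m k) x = x.
Proof. intro; induction k; simpl; auto. rewrite IHk; apply swap_fix; lia. Qed.

Lemma word tau tau' : inverses tau tau' -> forall m, exists L, forall x, x < m -> prod L x = tau x.
Proof.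
  intros [H1 H2] m. induction m.
  - exists []; intros; lia.
  - destruct IHm as [L HL].
    set (q := prod (rev L) (tau m)).
    assert (Hq : prod L q = tau m) by apply prod_rev.
    assert (Hqm : m <= q).
    { destruct (le_lt_dec m q); auto. exfalso. rewrite HL in Hq by auto.
      apply (f_equal tau') in Hq. rewrite !H2 in Hq. lia. }
    exists (L ++ chain m (q - m)). intros x Hx. rewrite prod_app.
    destruct (Nat.eq_dec x m).
    + subst. rewrite chain_m. replace (m + (q - m)) with q by lia. auto.
    + rewrite chain_fix by lia. apply HL; lia.
Qed.

Lemma gen_comp S h g : in_gen S h -> in_gen S g -> in_gen S (fun x => h (g x)).
Proof.
  induction 1; intro Hg.
  - exact Hg.
  - exact (gen_mul S s (fun x => g0 (g x)) H (IHin_gen Hg)).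
  - exact (gen_mulinv S s s' (fun x => g0 (g x)) H H0 (IHin_gen Hg)).
Qed.

Lemma transp i : exists h h', G_B h /\ inverses h h' /\ forall x, h x = swap i x /\ h' x = swap i x.
Proof.
  set (A := fun j => if j <=? i then false else Cs j).
  set (B := fun j => if j =? i then true else A j).
  assert (HA : bi_immune A).
  { apply (strong_bi Cs i); [apply Cs_strong|]. intros j Hj; unfold A.
    destruct (Nat.leb_spec j i); auto; lia. }
  assert (HB : bi_immune B).
  { apply (strong_bi Cs i); [apply Cs_strong|]. intros j Hj; unfold B, A.
    destruct (Nat.eqb_spec j i); [lia|]. destruct (Nat.leb_spec j i); auto; lia. }
  assert (Hc : forall m, exists c, m < c /\ A c = false).
  { intro m. destruct HA as [_ [Hinf _]]. destruct (Hinf (S m)) as [c [? ?]]. exists c; split; auto; lia. }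
  destruct (sigma_exists A Hc) as [s [s' [Hs [[Hi1 Hi2] _]]]].
  set (s1 := fun x => swap i (s x)).
  set (s1' := fun x => s' (swap i x)).
  assert (Hs1 : is_sigma B s1).
  { intro x. destruct (Hs x) as [N0 HN0]. exists (Nat.max N0 i). intros N HN.
    rewrite (pp_shift A B i).
    - unfold s1; rewrite HN0; auto; lia.
    - intros j Hj; unfold A. destruct (Nat.leb_spec j i); auto; lia.
    - unfold B; rewrite Nat.eqb_refl; auto.
    - intros j Hj; unfold B. destruct (Nat.eqb_spec j i); auto; lia.
    - lia. }
  assert (Hinv1 : inverses s1 s1').
  { split; intro x; unfold s1, s1'. rewrite Hi1; apply swap_invol. rewrite swap_invol; apply Hi2. }
  assert (G1 : bi_immune_gen s1) by (exists B; auto).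
  assert (G2 : bi_immune_gen s) by (exists A; auto).
  exists (fun x => s1 (s' x)), (fun x => s (s1' x)).
  split; [|split; [split|]].
  - exact (gen_mul _ s1 _ G1 (gen_mulinv _ s s' (fun x => x) G2 (conj Hi1 Hi2) (gen_id _))).
  - intro x. unfold s1, s1'. rewrite !Hi1, swap_invol; auto.
  - intro x. unfold s1, s1'. rewrite swap_invol, !Hi1; auto.
  - intro x; unfold s1, s1'; rewrite Hi1; auto.
Qed.

Lemma word_G L : exists g g', G_B g /\ inverses g g' /\ forall x, g x = prod L x.
Proof.
  induction L as [|a L IH].
  - exists (fun x => x), (fun x => x). split; [constructor|]. split; [split; auto|]. auto.
  - destruct IH as [g [g' [Hg [[Hg1 Hg2] Hgx]]]].
    destruct (transp a) as [h [h' [Hh [[Hh1 Hh2] Hhx]]]].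
    exists (fun x => h (g x)), (fun x => g' (h' x)).
    split; [apply gen_comp; auto|]. split; [split|].
    + intro x. rewrite Hg1; auto.
    + intro x. rewrite Hh2; auto.
    + intro x. simpl. rewrite Hgx. apply Hhx.
Qed.

Lemma bound_exists (t : nat -> nat) n : exists m, n <= m /\ forall i, i < n -> t i < m.
Proof.
  induction n. exists 0; split; intros; lia.
  destruct IHn as [m [H1 H2]]. exists (S (Nat.max m (t n))). split. lia.
  intros i Hi. destruct (Nat.eq_dec i n). subst; lia. specialize (H2 i ltac:(lia)). lia.
Qed.

Theorem mainTheorem8 :
  forall (tau tau' : nat -> nat), inverses tau tau' ->
  forall n : nat,
  exists g g' : nat -> nat,
    G_B g /\ inverses g g' /\
    (forall i, i < n -> g i = tau i /\ g' i = tau' i).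
Proof.
  intros tau tau' Ht n.
  destruct (bound_exists tau' n) as [m [Hnm Hb]].
  destruct (word tau tau' Ht m) as [L HL].
  destruct (word_G L) as [g [g' [Hg [[Hg1 Hg2] Hgx]]]].
  exists g, g'. split; auto. split; [split; auto|].
  intros i Hi. split.
  - rewrite Hgx; apply HL; lia.
  - assert (E : g (tau' i) = i).
    { rewrite Hgx, HL by (apply Hb; auto). apply (proj1 Ht). }
    rewrite <- E at 1. apply Hg2.
Qed.
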